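(* Let $P$ be a finite poset and $\Bbbk$ a commutative ring with unit. Suppose that for every $a\in P$ one has $\widetilde H_m\bigl(\Delta(P_{<a}),\Bbbk\bigr)=0$ for all $m\le d(a)-2$. Then for every $n$ the simplicial chain complex $C_\bullet(\Delta(P),\Bbbk)$ of the order complex of $P$ and the conic chain complex $\mathcal C_\bullet(P,\Bbbk)$ have isomorphic $n$-th homology.
   Context: For a finite poset $P$ and $a\in P$ put $P_{\le a}=\{x\in P: x\le a\}$ and $P_{<a}=\{x\in P: x<a\}$. For a subset $S\subseteq P$, $\Delta(S)$ denotes the order complex of $S$ (the simplicial complex whose faces are the chains of $S$). The dimension of $a$ is $d(a)=d_P(a)=\dim\Delta(P_{\le a})$. For $n\in\mathbb Z$ put $P^n=\{a\in P: d(a)\le n\}$ and $\Delta^n=\Delta(P^n)$ (so $\Delta^{-1}$ is the empty complex). Faces of order complexes are oriented by listing their vertices in decreasing order. The conic chain complex $\mathcal C_\bullet(P,\Bbbk)$ has $\mathcal C_n(P,\Bbbk)=H_n(\Delta^n,\Delta^{n-1};\Bbbk)$ (relative simplicial homology) for $n\ge 0$, and for $n\ge1$ its differential $\partial_n$ is the composition $\iota_{n-1}\circ\delta_n$, where $\delta_n\colon H_n(\Delta^n,\Delta^{n-1};\Bbbk)\to\widetilde H_{n-1}(\Delta^{n-1};\Bbbk)$ is the connecting map of the long exact sequence of the pair $(\Delta^n,\Delta^{n-1})$ and $\iota_{n-1}\colon \widetilde H_{n-1}(\Delta^{n-1};\Bbbk)\to H_{n-1}(\Delta^{n-1},\Delta^{n-2};\Bbbk)$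 is the (injective) natural map of the long exact sequence of the pair $(\Delta^{n-1},\Delta^{n-2})$. *)

(* Defs.v *)
From HB Require Import structures.
From mathcomp Require Import all_boot all_order all_algebra.
Set Implicit Arguments. Unset Strict Implicit. Unset Printing Implicit Defensive.
Import Order.TTheory GRing.Theory Num.Theory.
Local Open Scope ring_scope.

Section Conic.
Variables (disp : Order.disp_t) (P : finPOrderType disp) (k : comPzRingType).

(* simplicial chains on subsets of P: finitely supported coefficient functions
   on finite subsets of P (only chains of P will carry nonzero coefficients) *)
Local Notation chains := {ffun {set P} -> k^o}.

Definition ischain (S : {set P}) : bool :=
  [forall x in S, forall y in S, (x <= y)%O || (y <= x)%O].

Definition uchain (S : {set P}) (n : int) (c : chains) : Prop :=
  forall F, c F != 0 ->
    [/\ F != set0, ischain F, F \subset S & (#|F|%:Z = n + 1)%R].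

(* same, for the augmented complex: the empty chain is the (-1)-face *)
Definition rchain (S : {set P}) (m : int) (c : chains) : Prop :=
  forall F, c F != 0 -> [/\ ischain F, F \subset S & (#|F|%:Z = m + 1)%R].

(* augmented boundary: faces oriented by listing vertices in decreasing order,
   removing x from T :|: {x} gets sign (-1)^#{y in T | x < y} *)
Definition bdr (c : chains) : chains :=
  [ffun T => \sum_(x in ~: T)
     (-1) ^+ #|[set y in T | (x < y)%O]| * c (x |: T)].

(* ordinary (unreduced) boundary: no (-1)-dimensional face *)
Definition bd (c : chains) : chains :=
  [ffun T => if T == set0 then 0 else bdr c T].

Definition rh_vanish (S : {set P}) (m : int) : Prop :=
  forall c, rchain S m c -> bdr c = 0 ->
    exists e, rchain S (m + 1) e /\ c = bdr e.

(* d(a) = dim Delta(P_{<= a}) *)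
Definition dimP (a : P) : int :=
  (\max_(S : {set P} | ischain S && (S \subset [set x | (x <= a)%O])) #|S|)%:Z - 1.

Definition Pn (m : int) : {set P} := [set a | dimP a <= m].

Definition Zs (n : int) (c : chains) : Prop := uchain setT n c /\ bd c = 0.
Definition Bs (n : int) (c : chains) : Prop :=
  exists e, uchain setT (n + 1) e /\ c = bd e.

(* relative cycles of the pair (Delta^n, Delta^{n-1}) in degree n *)
Definition RC (n : int) (c : chains) : Prop :=
  uchain (Pn n) n c /\ uchain (Pn (n - 1)) (n - 1) (bd c).

(* Conic complex: C_n = H_n(Delta^n, Delta^{n-1}) is represented by relative
   cycles c modulo C_n(Delta^{n-1}) + bd C_{n+1}(Delta^n); the differential
   iota o delta sends [c] to the class of bd c in H_{n-1}(Delta^{n-1},Delta^{n-2}).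
   Zc n / Bc n are the preimages in the relative cycles of the cycles and
   boundaries of the conic complex, so H_n(conic) = Zc n / Bc n. *)
Definition Zc (n : int) (c : chains) : Prop :=
  RC n c /\ exists a b, uchain (Pn (n - 2)) (n - 1) a /\ uchain (Pn (n - 1)) n b
                      /\ bd c = a + bd b.
Definition Bc (n : int) (c : chains) : Prop :=
  exists e a b, [/\ RC (n + 1) e, uchain (Pn (n - 1)) n a,
                    uchain (Pn n) (n + 1) b & c = bd e + a + bd b].

End Conic.

(* The k-modules Z1/B1 and Z2/B2 (subquotients of V1, V2) are isomorphic:
   there is a map on representatives inducing a well-defined k-linear bijection
   Z1/B1 -> Z2/B2 (linearity only required modulo B2, so that every module
   isomorphism of the quotients arises this way). *)
Definition subquot_iso (k : pzRingType) (V1 V2 : lmodType k)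
  (Z1 B1 : V1 -> Prop) (Z2 B2 : V2 -> Prop) : Prop :=
  exists f : V1 -> V2,
    [/\ forall x, Z1 x -> Z2 (f x),
        forall x y, Z1 x -> Z1 y -> B2 (f (x + y) - (f x + f y)),
        forall (r : k) x, Z1 x -> B2 (f (r *: x) - r *: f x),
        forall x y, Z1 x -> Z1 y -> B1 (x - y) -> B2 (f x - f y)
      & forall x y, Z1 x -> Z1 y -> B2 (f x - f y) -> B1 (x - y)] /\
    forall y, Z2 y -> exists2 x, Z1 x & B2 (y - f x).

(* Main.v *)
Require Import Defs.
From HB Require Import structures.
From mathcomp Require Import all_boot all_order all_algebra.
From mathcomp Require Import zify.
Set Implicit Arguments. Unset Strict Implicit. Unset Printing Implicit Defensive.
Import Order.TTheory GRing.Theory Num.Theory.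
Local Open Scope ring_scope.

Section Aux.
Variables (disp : Order.disp_t) (P : finPOrderType disp) (k : comPzRingType).
Local Notation chains := {ffun {set P} -> k^o}.
Implicit Types (S T F : {set P}) (c e : chains) (a x y t : P).

Lemma chainE S : ischain S -> forall x y, x \in S -> y \in S -> ((x <= y)%O || (y <= x)%O).
Proof.
move=> H x y Hx Hy.
by move/forallP: H => /(_ x); rewrite Hx /= => /forallP /(_ y); rewrite Hy.
Qed.

Lemma chainI S : (forall x y, x \in S -> y \in S -> ((x <= y)%O || (y <= x)%O)) -> ischain S.
Proof.
move=> H; apply/forallP=> x; apply/implyP=> Hx; apply/forallP=> y; apply/implyP=> Hy.
exact: H.
Qed.

Lemma chain_sub S T : T \subset S -> ischain S -> ischain T.
Proof. move=> sub H; apply: chainI => x y Hx Hy; apply: (chainE H); exact: (subsetP sub). Qed.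

Lemma chain_lt S x y : ischain S -> x \in S -> y \in S -> x != y -> ((x < y)%O || (y < x)%O).
Proof.
move=> H Hx Hy nxy; have := chainE H Hx Hy.
by rewrite !lt_neqAle nxy eq_sym nxy.
Qed.

Definition ltset (a : P) : {set P} := [set x | (x < a)%O].
Definition dimN (a : P) : nat :=
  \max_(S : {set P} | ischain S && (S \subset [set x | (x <= a)%O])) #|S|.

Lemma dimPE a : dimP a = (dimN a)%:Z - 1.
Proof. by []. Qed.

Lemma dimN_ge S a : ischain S -> S \subset [set x | (x <= a)%O] -> (#|S| <= dimN a)%N.
Proof. move=> cS sS; apply: (leq_bigmax_cond (F := fun S => #|S|)); by rewrite cS sS. Qed.

Lemma dimN_gt0 a : (0 < dimN a)%N.
Proof.
apply: leq_trans (dimN_ge (S := [set a]) _ _); first by rewrite cards1.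
  by apply: chainI => x y; rewrite !inE => /eqP-> /eqP->; rewrite lexx.
by apply/subsetP=> x; rewrite !inE => /eqP->.
Qed.

Lemma dimN_lt x y : (x < y)%O -> (dimN x < dimN y)%N.
Proof.
move=> xy.
have H : (dimN x <= (dimN y).-1)%N.
  apply/bigmax_leqP => S /andP[cS sS].
  have yS : y \notin S.
    apply/negP=> yS; move/subsetP: sS => /(_ y yS); rewrite inE => yx.
    by have := lt_le_trans xy yx; rewrite ltxx.
  have: (#|y |: S| <= dimN y)%N.
    apply: dimN_ge.
      apply: chainI => u v; rewrite !inE => /orP[/eqP->|uS] /orP[/eqP->|vS].
      - by rewrite lexx.
      - move/subsetP: sS => /(_ v vS); rewrite inE => vx.
        by rewrite (le_trans vx (ltW xy)) orbT.
      - move/subsetP: sS => /(_ u uS); rewrite inE => ux.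
        by rewrite (le_trans ux (ltW xy)).
      - exact: (chainE cS).
    apply/subsetP=> u; rewrite !inE => /orP[/eqP->|uS]; first by rewrite lexx.
    move/subsetP: sS => /(_ u uS); rewrite inE => ux; exact: (le_trans ux (ltW xy)).
  rewrite cardsU1 yS add1n => h; rewrite -ltnS (leq_trans h) //.
  by have := dimN_gt0 y; case: (dimN y).
have := dimN_gt0 y; case: (dimN y) H => // n; rewrite /= ltnS => H _; exact H.
Qed.

Lemma dimP_lt x y : (x < y)%O -> dimP x < dimP y.
Proof. move/dimN_lt; rewrite !dimPE; lia. Qed.

Lemma dimP_ge0 a : 0 <= dimP a.
Proof. have := dimN_gt0 a; rewrite dimPE; lia. Qed.

Lemma chain_card_Pn F q : F != set0 -> ischain F -> F \subset Pn P q -> #|F|%:Z <= q + 1.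
Proof.
move=> F0 cF sF.
have [F0'|[t0 t0F]] := set_0Vmem F; first by rewrite F0' eqxx in F0.
have h0 : (0 < #|(fun x => x \in F)|)%N by apply/card_gt0P; exists t0.
have [t tF maxt] := @eq_bigmax_cond P (fun x => x \in F) dimN h0.
have le x : x \in F -> (dimN x <= dimN t)%N.
  by move=> xF; rewrite -maxt; apply: (leq_bigmax_cond (F := dimN)).
have subt : F \subset [set x | (x <= t)%O].
  apply/subsetP=> x xF; rewrite inE.
  have [->|nxt] := eqVneq x t; first by rewrite lexx.
  case/orP: (chain_lt cF xF tF nxt) => [/ltW //|tx].
  by have := dimN_lt tx; rewrite ltnNge le.
have := dimN_ge cF subt.
move/subsetP: sF => /(_ t tF); rewrite inE dimPE; lia.
Qed.


Lemma bdE c T : bd c T = if T == set0 then 0 else bdr c T.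
Proof. by rewrite ffunE. Qed.
Lemma bdrE c T : bdr c T =
  \sum_(x in ~: T) (-1) ^+ #|[set y in T | (x < y)%O]| * c (x |: T).
Proof. by rewrite ffunE. Qed.

Lemma bdrD c1 c2 : bdr (c1 + c2) = bdr c1 + bdr c2.
Proof.
apply/ffunP=> T; rewrite !ffunE -big_split; apply: eq_bigr => x _.
by rewrite ffunE mulrDr.
Qed.

Lemma bdrZ (r : k) c : bdr (r *: c) = r *: bdr c.
Proof.
apply/ffunP=> T; rewrite !ffunE scaler_sumr; apply: eq_bigr => x _.
by rewrite ffunE /GRing.scale /= mulrCA.
Qed.

Lemma bdrN c : bdr (- c) = - bdr c.
Proof. by rewrite -scaleN1r bdrZ scaleN1r. Qed.

Lemma bdr0 : bdr (0 : chains) = 0.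
Proof. by apply/ffunP=> T; rewrite !ffunE big1 // => x _; rewrite ffunE mulr0. Qed.

Lemma bdD c1 c2 : bd (c1 + c2) = bd c1 + bd c2.
Proof.
apply/ffunP=> T; rewrite bdE [RHS]ffunE !bdE; case: ifP => _; first by rewrite addr0.
by rewrite bdrD ffunE.
Qed.

Lemma bdZ (r : k) c : bd (r *: c) = r *: bd c.
Proof.
apply/ffunP=> T; rewrite bdE [RHS]ffunE !bdE; case: ifP => _; first by rewrite scaler0.
by rewrite bdrZ ffunE.
Qed.

Lemma bdN c : bd (- c) = - bd c.
Proof. by rewrite -scaleN1r bdZ scaleN1r. Qed.

Lemma bd0 : bd (0 : chains) = 0.
Proof. by apply/ffunP=> T; rewrite bdE bdr0 !ffunE if_same. Qed.

Lemma bdB c1 c2 : bd (c1 - c2) = bd c1 - bd c2.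
Proof. by rewrite bdD bdN. Qed.

Lemma bd_sum (I : finType) (A : pred I) (f : I -> chains) :
  bd (\sum_(i | A i) f i) = \sum_(i | A i) bd (f i).
Proof. exact: (big_morph _ bdD bd0). Qed.

Lemma uchain0 S n : uchain S n (0 : chains).
Proof. by move=> F; rewrite ffunE eqxx. Qed.

Lemma uchainD S n c1 c2 : uchain S n c1 -> uchain S n c2 -> uchain S n (c1 + c2).
Proof.
move=> h1 h2 F; rewrite ffunE.
have [/h1 //|/negPn/eqP->] := boolP (c1 F != 0).
by rewrite add0r => /h2.
Qed.

Lemma uchainZ S n (r : k) c : uchain S n c -> uchain S n (r *: c).
Proof.
move=> h F; rewrite ffunE.
have [/h //|/negPn/eqP->] := boolP (c F != 0).
by rewrite scaler0 eqxx.
Qed.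

Lemma uchainN S n c : uchain S n c -> uchain S n (- c).
Proof. by move=> h; rewrite -scaleN1r; apply: uchainZ. Qed.

Lemma uchainB S n c1 c2 : uchain S n c1 -> uchain S n c2 -> uchain S n (c1 - c2).
Proof. by move=> h1 h2; apply: uchainD => //; apply: uchainN. Qed.

Lemma uchain_sum (I : finType) (A : pred I) (f : I -> chains) S n :
  (forall i, A i -> uchain S n (f i)) -> uchain S n (\sum_(i | A i) f i).
Proof.
move=> h; apply: (big_ind (uchain S n)); [exact: uchain0| exact: uchainD | exact: h].
Qed.

Lemma uchainS S S' n c : S \subset S' -> uchain S n c -> uchain S' n c.
Proof.
move=> sS h F /h [F0 cF sF cardF]; split=> //; exact: subset_trans sF sS.
Qed.

Lemma uchainT S n c : uchain S n c -> uchain setT n c.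
Proof. by apply: uchainS; apply: subsetT. Qed.

Lemma PnS p q : p <= q -> Pn P p \subset Pn P q.
Proof. by move=> pq; apply/subsetP=> x; rewrite !inE => h; apply: le_trans h pq. Qed.

Lemma PnT : Pn P (#|P|%:Z) = setT.
Proof.
apply/setP=> a; rewrite !inE dimPE.
have : (dimN a <= #|P|)%N by apply/bigmax_leqP=> S _; apply: max_card.
lia.
Qed.

Lemma uchain_dim q n c : q < n -> uchain (Pn P q) n c -> c = 0.
Proof.
move=> qn h; apply/ffunP=> F; rewrite ffunE.
apply/eqP; apply: contraT => /h [F0 cF sF cardF].
have := chain_card_Pn F0 cF sF; lia.
Qed.

Lemma uchain_neg S n c : n < 0 -> uchain S n c -> c = 0.
Proof.
move=> n0 h; apply/ffunP=> F; rewrite ffunE.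
apply/eqP; apply: contraT => /h [F0 cF sF cardF].
have : (0 < #|F|)%N by rewrite card_gt0.
lia.
Qed.


Definition cone a e : chains :=
  [ffun F : {set P} => if (a \in F) && (F :\ a \subset ltset a) then e (F :\ a) else 0].

Lemma coneE a e F : cone a e F =
  if (a \in F) && (F :\ a \subset ltset a) then e (F :\ a) else 0.
Proof. by rewrite ffunE. Qed.

Lemma card_up_D1 a x T : a \in T -> (x < a)%O ->
  #|[set y in T | (x < y)%O]| = (#|[set y in T :\ a | (x < y)%O]|).+1.
Proof.
move=> aT xa.
have -> : [set y in T | (x < y)%O] = a |: [set y in T :\ a | (x < y)%O].
  apply/setP=> y; rewrite !inE; case: eqVneq => [->|] //=; by rewrite aT xa.
by rewrite cardsU1 !inE eqxx.
Qed.

Lemma bdr_cone a e : (forall T, e T != 0 -> T \subset ltset a) ->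
  bdr (cone a e) = e - cone a (bdr e).
Proof.
move=> supp.
have eT0 (U : {set P}) : ~~ (U \subset ltset a) -> e U = 0.
  by move=> nU; apply/eqP; apply: contraNT nU; apply: supp.
apply/ffunP=> T; rewrite bdrE [RHS]ffunE [X in _ + X]ffunE coneE.
under eq_bigr => x _ do rewrite coneE.
case aT: (a \in T) => /=.
- rewrite (eT0 T); last first.
    by apply/negP => /subsetP /(_ a aT); rewrite inE ltxx.
  rewrite sub0r.
  case: ifP => sub.
  + rewrite bdrE [in RHS](bigD1 a) /=; last by rewrite !inE ?eqxx.
    rewrite setD1K // (eT0 T) ?mulr0 ?add0r; last first.
      by apply/negP => /subsetP /(_ a aT); rewrite inE ltxx.
    rewrite [in RHS](eq_bigl (fun x => x \in ~: T)); last first.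
      by move=> x; rewrite !inE; case: (eqVneq x a) => [->|xa] /=; rewrite ?eqxx ?aT ?andbF ?andbT.
    rewrite -sumrN; apply: eq_bigr => x; rewrite inE => xT.
    have xa : x != a by apply: contraNneq xT => ->.
    rewrite in_setU1 aT orbT /=.
    have -> : (x |: T) :\ a = x |: (T :\ a).
      by apply/setP=> y; rewrite !inE; case: (eqVneq y x) => [->|]; rewrite ?eqxx /= ?xa.
    case xa': (x < a)%O.
    * rewrite subUset sub1set inE xa' sub /=.
      by rewrite (card_up_D1 aT xa') exprS mulN1r mulNr.
    * rewrite subUset sub1set inE xa' /= eT0 ?mulr0 ?oppr0 //.
      by rewrite subUset sub1set inE xa'.
  + rewrite oppr0; apply: big1 => x; rewrite inE => xT.
    rewrite in_setU1 aT orbT /=.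
    have xa : x != a by apply: contraNneq xT => ->.
    have -> : (x |: T) :\ a = x |: (T :\ a).
      by apply/setP=> y; rewrite !inE; case: (eqVneq y x) => [->|]; rewrite ?eqxx /= ?xa.
    by rewrite subUset sub andbF mulr0.
- rewrite subr0 (bigD1 a) /=; last by rewrite inE aT.
  rewrite big1 ?addr0; last first.
    move=> x /andP[_ xa]; rewrite in_setU1 eq_sym (negbTE xa) aT /=.
    by rewrite mulr0.
  rewrite setU11 setU1K ?aT //=.
  case: ifP => sub.
  + have -> : [set y in T | (a < y)%O] = set0.
      apply/setP=> y; rewrite !inE; case yT: (y \in T) => //=.
      have := subsetP sub y yT; rewrite inE => ya.
      by rewrite lt_gtF.
    by rewrite cards0 expr0 mul1r.
  + by rewrite mulr0 eT0 // sub.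
Qed.


Lemma cone0 a : cone a 0 = 0.
Proof. by apply/ffunP=> F; rewrite coneE !ffunE if_same. Qed.

Lemma bd_bdr c1 c2 : bdr c1 = bdr c2 -> bd c1 = bd c2.
Proof. by move=> h; apply/ffunP=> T; rewrite !bdE h. Qed.

Lemma ltset_Pn a p : dimP a = p -> ltset a \subset Pn P (p - 1).
Proof.
move=> da; apply/subsetP=> y; rewrite !inE => /dimP_lt; rewrite da; lia.
Qed.

Lemma notin_ltset a : a \notin ltset a.
Proof. by rewrite inE ltxx. Qed.

Lemma cardU1_ltset a T : T \subset ltset a -> #|a |: T| = (#|T|).+1.
Proof.
move=> sT; rewrite cardsU1; have -> : a \notin T.
  by apply: contraNN (notin_ltset a) => /(subsetP sT).
by [].
Qed.

Lemma chainU1_ltset a T : T \subset ltset a -> ischain T -> ischain (a |: T).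
Proof.
move=> sT cT; apply: chainI => u v; rewrite !in_setU1.
case/orP=> [/eqP->|uT]; case/orP=> [/eqP->|vT]; rewrite ?lexx //.
- by have := subsetP sT v vT; rewrite inE => /ltW ->; rewrite orbT.
- by have := subsetP sT u uT; rewrite inE => /ltW ->.
- exact: (chainE cT).  
Qed.

Lemma stepD (Hyp : forall (a : P) (m : int), m <= dimP a - 2 ->
     rh_vanish k [set x | (x < a)%O] m) p m c :
  m < p -> uchain (Pn P p) m c -> uchain (Pn P (p - 1)) (m - 1) (bd c) ->
  exists (d0 : chains) (b : chains), [/\ uchain (Pn P (p - 1)) m d0, uchain (Pn P p) (m + 1) b,
                   c = d0 + bd b & bd (bd b) = 0].
Proof.
move=> mp uc ubc.
have [m0|m0] := ltP m 0.
  rewrite (uchain_neg m0 uc); exists 0, 0; split; rewrite ?bd0 ?addr0 //; exact: uchain0.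
pose A := [set a : P | dimP a == p].
have K F a : c F != 0 -> a \in A -> a \in F -> F :\ a \subset ltset a.
  move=> /uc [F0 cF sF cardF]; rewrite inE => /eqP da aF.
  apply/subsetP=> y; rewrite in_setD1 => /andP[ya yF]; rewrite inE.
  case/orP: (chain_lt cF yF aF ya) => // /dimP_lt.
  have := subsetP sF y yF; rewrite inE da; lia.
pose c' a : chains := [ffun T : {set P} => if T \subset ltset a then c (a |: T) else 0].
pose ca a : chains := [ffun F : {set P} => if a \in F then c F else 0].
have supp' a T : c' a T != 0 -> T \subset ltset a.
  by rewrite ffunE; case: ifP => //; rewrite eqxx.
have C1 a : a \in A -> ca a = cone a (c' a).
  move=> aA; apply/ffunP=> F; rewrite coneE !ffunE.
  case aF: (a \in F) => //=.
  case: ifP => sub; first by rewrite sub setD1K.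
  apply/eqP; apply: contraFT sub => h; exact: K h aA aF.
have C2 a : a \in A -> bdr (c' a) = 0.
  move=> aA; apply/ffunP=> S; rewrite [RHS]ffunE.
  case sS: (S \subset ltset a); last first.
    rewrite bdrE big1 // => x _; rewrite ffunE subUset sS andbF mulr0 //.
  have aS : a \notin S by apply: contraNN (notin_ltset a) => /(subsetP sS).
  have aT : a \in a |: S by rewrite setU11.
  have h1 : bdr c (a |: S) = 0.
    have : bd c (a |: S) = 0.
      apply/eqP; apply: contraT => /ubc [_ _ sub _].
      have := subsetP sub a aT; move: aA; rewrite !inE => /eqP->; lia.
    by rewrite bdE; case: eqP => // /setP /(_ a); rewrite aT inE.
  have h2 : bdr c (a |: S) = bdr (ca a) (a |: S).
    rewrite !bdrE; apply: eq_bigr => x _; rewrite [ca a _]ffunE.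
    by rewrite in_setU1 aT orbT.
  move: h1; rewrite h2 C1 // bdr_cone; last exact: supp'.
  rewrite (_ : (c' a - cone a (bdr (c' a))) (a |: S) = c' a (a |: S) - cone a (bdr (c' a)) (a |: S)); last by rewrite !ffunE.
  rewrite coneE [c' a _]ffunE.
  rewrite aT /= setU1K // sS.
  have -> : (a |: S \subset ltset a) = false.
    by apply/negP => /subsetP /(_ a aT); rewrite inE ltxx.
  by rewrite /= sub0r => /eqP; rewrite oppr_eq0 => /eqP.
have C3 a : a \in A -> rchain (ltset a) (m - 1) (c' a).
  move=> aA T h; have sT := supp' _ _ h; move: h; rewrite ffunE sT => /uc.
  case=> [_ cT sT' cardT]; split=> //.
    by apply: chain_sub cT; apply: subsetUr.
  by move: cardT; rewrite (cardU1_ltset sT); lia.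
have Ex a : exists e : chains, a \in A -> rchain (ltset a) m e /\ c' a = bdr e.
  have [aA|aA] := boolP (a \in A); last by exists 0.
  have := Hyp a (m - 1); rewrite -/(ltset a).
  move: (aA); rewrite inE => /eqP->; move=> /(_ ltac:(lia)) /(_ (c' a) (C3 a aA) (C2 a aA)).
  case=> e [re he]; exists e => _; split => //; by rewrite (_ : m - 1 + 1 = m) // in re; lia.
have [e He] := fin_all_exists Ex.
have e0 a : a \in A -> e a set0 = 0.
  move=> aA; apply/eqP; apply: contraT => /(proj1 (He a aA)) [_ _ cd].
  by move: cd; rewrite cards0; lia.
have C4 a : a \in A -> bd (cone a (e a)) = e a - ca a.
  move=> aA; have [re he] := He a aA.
  apply/ffunP=> T; rewrite bdE [RHS]ffunE [X in _ + X]ffunE [ca a T]ffunE.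
  case: eqP => [->|_]; first by rewrite e0 // inE oppr0 addr0.
  rewrite bdr_cone; last by move=> U /re [].
  by rewrite -he -C1 // !ffunE.
have C6 a : a \in A -> bd (bd (cone a (e a))) = 0.
  move=> aA; have [re he] := He a aA; rewrite C4 // bdB.
  suff -> : bd (e a) = bd (ca a) by rewrite subrr.
  apply: bd_bdr; rewrite -he C1 // bdr_cone //; last exact: supp'.
  by rewrite C2 // cone0 subr0.
pose c0 : chains := [ffun F : {set P} => if F :&: A == set0 then c F else 0].
have C5 : c = c0 + \sum_(a in A) ca a.
  apply/ffunP=> F; rewrite ffunE sum_ffunE ffunE.
  have [cF0|cF0] := eqVneq (c F) 0.
    rewrite cF0 if_same big1 ?addr0 // => a _; rewrite ffunE cF0 if_same //.
  case: (set_0Vmem (F :&: A)) => [FA|[a aFA]].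
    rewrite FA eqxx big1 ?addr0 // => a aA; rewrite ffunE.
    case: ifP => // aF; have : a \in F :&: A by rewrite inE aF.
    by rewrite FA inE.
  have -> : (F :&: A == set0) = false.
    by apply/negP => /eqP FA; move: aFA; rewrite FA inE.
  move: aFA; rewrite inE => /andP[aF aA].
  rewrite add0r (bigD1 a) //= ffunE aF big1 ?addr0 // => a' /andP[a'A a'a].
  rewrite ffunE; case: ifP => // a'F.
  have := subsetP (K F a cF0 aA aF) a'; rewrite in_setD1 a'a a'F => /(_ isT).
  rewrite inE => /dimP_lt; move: aA a'A; rewrite !inE => /eqP-> /eqP->; lia.
exists (c0 + \sum_(a in A) e a), (- \sum_(a in A) cone a (e a)); split.
- apply: uchainD.
    move=> F; rewrite ffunE; case: ifP => [/eqP FA /uc [F0 cF sF cardF]|]; last by rewrite eqxx.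
    split=> //; apply/subsetP=> y yF; have := subsetP sF y yF; rewrite !inE.
    have yA : y \notin A.
      apply/negP => yA; have : y \in F :&: A by rewrite inE yF.
      by rewrite FA inE.
    move: yA; rewrite inE; lia.
  apply: uchain_sum => a aA F /(proj1 (He a aA)) [cF sF cardF]; split=> //.
    by apply/eqP => F0; move: cardF; rewrite F0 cards0; lia.
  apply: subset_trans sF _; apply: ltset_Pn; by move: aA; rewrite inE => /eqP.
- apply: uchainN; apply: uchain_sum => a aA F.
  rewrite coneE; case: ifP => [/andP[aF sub] h|]; last by rewrite eqxx.
  have [cF sF cardF] := proj1 (He a aA) _ h.
  have dA : dimP a = p by move: aA; rewrite inE => /eqP.
  split.
  + by apply/eqP => F0; move: aF; rewrite F0 inE.
  + by rewrite -(setD1K aF); apply: chainU1_ltset.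
  + rewrite -(setD1K aF) subUset sub1set inE dA lexx /=.
    apply: subset_trans sub _; apply: subset_trans (ltset_Pn dA) _; apply: PnS; lia.
  + by rewrite (cardsD1 a F) aF; move: cardF; lia.
- rewrite bdN bd_sum {1}C5.
  have -> : \sum_(a in A) bd (cone a (e a)) = \sum_(a in A) (e a - ca a).
    by apply: eq_bigr => a aA; exact: C4.
  by rewrite sumrB opprB -addrA subrKC.
- rewrite bdN bd_sum bdN bd_sum big1 ?oppr0 // => a aA; exact: C6.
Qed.


Section Iter.
Variable Hyp : forall (a : P) (m : int), m <= dimP a - 2 ->
     rh_vanish k [set x | (x < a)%O] m.

Lemma cell n (j : nat) (z : chains) : uchain (Pn P (n + j%:Z)) n z -> bd z = 0 ->
  exists (z' w : chains), [/\ uchain (Pn P n) n z', bd z' = 0,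
                              uchain setT (n + 1) w & z = z' + bd w].
Proof.
elim: j z => [|j IH] z uz bz.
  exists z, 0; split=> //; first by rewrite addr0 in uz.
    exact: uchain0.
  by rewrite bd0 addr0.
have [|||d0 [b [ud ub zeq bb]]] := stepD Hyp (p := n + j.+1%:Z) (m := n) (c := z).
- lia.
- exact: uz.
- by rewrite bz; exact: uchain0.
have bd0' : bd d0 = 0.
  by move: bz; rewrite zeq bdD bb addr0.
rewrite (_ : n + j.+1%:Z - 1 = n + j%:Z) in ud; last by lia.
have [z' [w [uz' bz' uw deq]]] := IH d0 ud bd0'.
exists z', (w + b); split=> //.
  by apply: uchainD => //; apply: uchainT ub.
by rewrite zeq deq bdD addrA.
Qed.

Lemma lift n (j : nat) (w : chains) : uchain (Pn P (n + 1 + j%:Z)) (n + 1) w ->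
  uchain (Pn P n) n (bd w) ->
  exists w' : chains, uchain (Pn P (n + 1)) (n + 1) w' /\ bd w' = bd w.
Proof.
elim: j w => [|j IH] w uw ubw.
  by exists w; split=> //; rewrite addr0 in uw.
have [|||d0 [b [ud ub weq bb]]] := stepD Hyp (p := n + 1 + j.+1%:Z) (m := n + 1) (c := w).
- lia.
- exact: uw.
- rewrite (_ : n + 1 - 1 = n); last by lia.
  apply: uchainS ubw; apply: PnS; lia.
have bdd : bd d0 = bd w by rewrite weq bdD bb addr0.
rewrite (_ : n + 1 + j.+1%:Z - 1 = n + 1 + j%:Z) in ud; last by lia.
have [w' [uw' bw']] := IH d0 ud ltac:(by rewrite bdd).
by exists w'; split=> //; rewrite bw' bdd.
Qed.

End Iter.

Lemma PnT' q : #|P|%:Z <= q -> Pn P q = setT.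
Proof. by move=> h; apply/eqP; rewrite eqEsubset subsetT -PnT PnS. Qed.

End Aux.
Section G.
Variable V : zmodType.
Implicit Types x y s t u sx sy bx b_y bs : V.
Lemma grp1 x y s sx sy bx b_y bs :
  x + y = s + bs -> x = sx + bx -> y = sy + b_y -> s - (sx + sy) = (bx + b_y) - bs.
Proof.
move=> h1 h2 h3.
have -> : s = x + y - bs by rewrite h1 addrK.
rewrite h2 h3 addrACA; set A := sx + sy; set B := bx + b_y.
by rewrite (addrAC (A + B) (- bs) (- A)) [A + B]addrC addrK.
Qed.

Lemma grp4 x y t sx sy bx b_y :
  x - y = t -> x = sx + bx -> y = sy + b_y -> sx - sy = t - bx + b_y.
Proof.
move=> h h2 h3; rewrite -h h2 h3 opprD addrACA.
set A := sx - sy.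
by rewrite (addrA A bx (-b_y)) (addrAC (A + bx) (-b_y) (-bx)) (addrK bx A) addrNK.
Qed.

Lemma grp5 x y u sx sy bx b_y :
  sx - sy = u -> x = sx + bx -> y = sy + b_y -> x - y = u + (bx - b_y).
Proof. by move=> h h2 h3; rewrite -h h2 h3 opprD addrACA. Qed.

Lemma grp6 y b s t : y - b = s + t -> y - s = t + b.
Proof.
move=> h; have -> : y = s + t + b by rewrite -h subrK.
by rewrite -(addrA s t b) [s + _]addrC addrK.
Qed.
End G.

Lemma grpZ (R : pzRingType) (V : lmodType R) (r : R) (x s sx bx bs : V) :
  r *: x = s + bs -> x = sx + bx -> s - r *: sx = r *: bx - bs.
Proof.
move=> h1 h2.
have -> : s = r *: x - bs by rewrite h1 addrK.
rewrite h2 scalerDr; set A := r *: sx; set B := r *: bx.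
by rewrite (addrAC (A + B) (- bs) (- A)) [A + B]addrC addrK.
Qed.

From Stdlib Require Import ClassicalEpsilon.

Theorem mainTheorem1 (disp : Order.disp_t) (P : finPOrderType disp)
    (k : comPzRingType) :
  (forall (a : P) (m : int), m <= dimP a - 2 ->
     rh_vanish k [set x | (x < a)%O] m) ->
  forall n : int,
    subquot_iso (@Zs _ P k n) (@Bs _ P k n) (@Zc _ P k n) (@Bc _ P k n).
Proof.
move=> Hyp n.
pose Ch := {ffun {set P} -> k^o}.
pose Gp (z y : Ch) := uchain (Pn P n) n y /\ bd y = 0 /\
   exists w : Ch, uchain setT (n + 1) w /\ z = y + bd w.
have cellZ (z : Ch) : Zs n z -> exists y : Ch, Gp z y.
  case=> uz bz.
  have uz' : uchain (Pn P (n + (#|P| + `|n|)%N%:Z)) n z.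
    rewrite PnT' //; lia.
  have [z' [w [u1 b1 uw e]]] := cell Hyp uz' bz.
  by exists z'; split=> //; split=> //; exists w.
pose f (z : Ch) : Ch := epsilon (inhabits 0) (Gp z).
have fE z : Zs n z -> Gp z (f z).
  by move=> h; apply: (epsilon_spec (inhabits 0) (Gp z)); apply: cellZ.
have liftE (u w : Ch) : uchain (Pn P n) n u -> uchain setT (n + 1) w -> u = bd w ->
    exists e : Ch, RC (n + 1) e /\ u = bd e.
  move=> uu uw ue.
  have uw' : uchain (Pn P (n + 1 + (#|P| + `|(n + 1)%R|)%N%:Z)) (n + 1) w.
    rewrite PnT' //; lia.
  have [w' [uw'' bw']] := lift Hyp uw' ltac:(by rewrite -ue).
  exists w'; split; last by rewrite bw'.
  split=> //; rewrite (_ : n + 1 - 1 = n); last by lia.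
  by rewrite bw' -ue.
have BcOf (u w : Ch) : uchain (Pn P n) n u -> uchain setT (n + 1) w -> u = bd w ->
    Bc n u.
  move=> uu uw ue; have [e [re be]] := liftE u w uu uw ue.
  exists e, 0, 0; split=> //.
  - exact: uchain0.
  - exact: uchain0.
  - by rewrite bd0 !addr0.
exists f; split; first split.
- move=> x Zx; have [uy [by0 [w [uw xe]]]] := fE x Zx.
  split; first by split=> //; rewrite by0; exact: uchain0.
  exists 0, 0; split; first exact: uchain0.
  split; first exact: uchain0.
  by rewrite by0 bd0 addr0.
- move=> x y Zx Zy.
  have Zxy : Zs n (x + y).
    case: Zx Zy => ux bx [uy byy]; split; first exact: uchainD.
    by rewrite bdD bx byy addr0.
  have [u1 [b1 [w1 [uw1 e1]]]] := fE _ Zx.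
  have [u2 [b2 [w2 [uw2 e2]]]] := fE _ Zy.
  have [u3 [b3 [w3 [uw3 e3]]]] := fE _ Zxy.
  apply: (BcOf _ (w1 + w2 - w3)).
  + by apply: uchainB => //; apply: uchainD.
  + by apply: uchainB => //; apply: uchainD.
  + by rewrite bdB bdD; apply: grp1 e3 e1 e2.
- move=> r x Zx.
  have Zrx : Zs n (r *: x).
    case: Zx => ux bx; split; first exact: uchainZ.
    by rewrite bdZ bx scaler0.
  have [u1 [b1 [w1 [uw1 e1]]]] := fE _ Zx.
  have [u2 [b2 [w2 [uw2 e2]]]] := fE _ Zrx.
  apply: (BcOf _ (r *: w1 - w2)).
  + by apply: uchainB => //; apply: uchainZ.
  + by apply: uchainB => //; apply: uchainZ.
  + by rewrite bdB bdZ; apply: grpZ e2 e1.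
- move=> x y Zx Zy [e [ue xy]].
  have [u1 [b1 [w1 [uw1 e1]]]] := fE _ Zx.
  have [u2 [b2 [w2 [uw2 e2]]]] := fE _ Zy.
  apply: (BcOf _ (e - w1 + w2)).
  + exact: uchainB.
  + by apply: uchainD => //; apply: uchainB.
  + by rewrite bdD bdB; apply: grp4 xy e1 e2.
- move=> x y Zx Zy [e [a [b [[ue1 ue2] ua ub eq]]]].
  have a0 : a = 0 by apply: (uchain_dim _ ua); lia.
  have [u1 [b1 [w1 [uw1 e1]]]] := fE _ Zx.
  have [u2 [b2 [w2 [uw2 e2]]]] := fE _ Zy.
  exists (e + b + (w1 - w2)); split.
    apply: uchainD; last exact: uchainB.
    by apply: uchainD; apply: uchainT; [exact: ue1 | exact: ub].
  by rewrite (grp5 eq e1 e2) a0 addr0 !bdD bdN.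
- move=> y [[uy ubdy] [a [b [ua [ub eq]]]]].
  have a0 : a = 0 by apply: (uchain_dim _ ua); lia.
  have Zx : Zs n (y - b).
    split; first by apply: uchainB; apply: uchainT; [exact: uy | exact: ub].
    by rewrite bdB eq a0 add0r subrr.
  have [ux [bx [w [uw ex]]]] := fE _ Zx.
  exists (y - b) => //.
  have bw : bd w = y - b - f (y - b) by rewrite {1}ex (addrC (f _)) addrK.
  have ubw : uchain (Pn P n) n (bd w).
    rewrite bw; apply: uchainB => //; apply: uchainB => //.
    by apply: uchainS ub; apply: PnS; lia.
  have [e [[ue1 ue2] be]] : exists e : Ch, RC (n + 1) e /\ bd w = bd e.
    exact: liftE _ _ ubw uw erefl.
  exists e, b, 0; split=> //; first exact: uchain0.
  by rewrite bd0 addr0 -be; apply: grp6.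
Qed.
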